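(* Let $(X,(\cdot,\cdot|\cdot))$ be a 2-inner product space over $\mathbb{K}\in\{\mathbb{R},\mathbb{C}\}$, let $n$ be a positive integer, let $x,y_1,\dots,y_n,z\in X$ and $c_1,\dots,c_n\in\mathbb{K}$. Define the three quantities $A_1=\max_{1\le i\le n}|c_i|^2\sum_{i=1}^n\|y_i|z\|^2$; $A_2(\alpha)=\big(\sum_{i=1}^n|c_i|^{2\alpha}\big)^{1/\alpha}\big(\sum_{i=1}^n\|y_i|z\|^{2\beta}\big)^{1/\beta}$ for $\alpha>1$, $\frac1\alpha+\frac1\beta=1$; $A_3=\sum_{i=1}^n|c_i|^2\max_{1\le i\le n}\|y_i|z\|^2$; and $B_1=\max_{1\le i\ne j\le n}|c_ic_j|\sum_{1\le i\ne j\le n}|(y_i,y_j|z)|$; $B_2(\gamma)=\Big[\big(\sum_{i=1}^n|c_i|^{\gamma}\big)^2-\sum_{i=1}^n|c_i|^{2\gamma}\Big]^{1/\gamma}\big(\sum_{1\le i\ne j\le n}|(y_i,y_j|z)|^{\delta}\big)^{1/\delta}$ for $\gamma>1$, $\frac1\gamma+\frac1\delta=1$; $B_3=\Big[\big(\sum_{i=1}^n|c_i|\big)^2-\sum_{i=1}^n|c_i|^2\Big]\max_{1\le i\ne j\le n}|(y_i,y_j|z)|$. Then for every choice of $A\in\{A_1,A_2(\alpha),A_3\}$ and $B\in\{B_1,B_2(\gamma),B_3\}$ (with any admissible $\alpha,\gamma$), \[ \Big|\sum_{i=1}^n c_i(x,y_i|z)\Big|^2\le \|x|z\|^2\,(A+B).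 \]
   Context: A 2-inner product on a linear space $X$ of dimension greater than $1$ over $\mathbb{K}$ ($\mathbb{K}=\mathbb{R}$ or $\mathbb{C}$) is a function $(\cdot,\cdot|\cdot):X\times X\times X\to\mathbb{K}$ such that for all $x,x',y,z\in X$ and $\alpha\in\mathbb{K}$: (i) $(x,x|z)\ge 0$, and $(x,x|z)=0$ iff $x$ and $z$ are linearly dependent; (ii) $(x,x|z)=(z,z|x)$; (iii) $(y,x|z)=\overline{(x,y|z)}$; (iv) $(\alpha x,y|z)=\alpha(x,y|z)$; (v) $(x+x',y|z)=(x,y|z)+(x',y|z)$. The associated 2-norm is $\|x|z\|=\sqrt{(x,x|z)}$. Sums and maxima indexed by $1\le i\ne j\le n$ run over all ordered pairs $(i,j)$ with $i,j\in\{1,\dots,n\}$, $i\ne j$. *)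

(* Defs.v *)
From mathcomp Require Import all_boot all_order all_algebra.
From mathcomp Require Import reals exp.
From mathcomp Require Import complex.
Import Order.TTheory GRing.Theory Num.Theory.

Set Implicit Arguments.
Unset Strict Implicit.
Unset Printing Implicit Defensive.

Local Open Scope ring_scope.

Definition lin_dep2 (K : numDomainType) (X : lmodType K) (x z : X) : Prop :=
  exists a b : K, (a != 0 \/ b != 0) /\ a *: x + b *: z = 0.

(* A 2-inner product on a K-linear space X of dimension greater than 1;
   [conj] is the conjugation of K (identity for K = R, complex conjugation
   for K = C). *)
Record two_inner_product (K : numDomainType) (conj : K -> K)
    (X : lmodType K) (ip : X -> X -> X -> K) : Prop := {
  tip_dim : exists u v : X, ~ lin_dep2 u v;
  tip_nonneg : forall x z : X, 0 <= ip x x z;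
  tip_zero : forall x z : X, ip x x z = 0 <-> lin_dep2 x z;
  tip_sym : forall x z : X, ip x x z = ip z z x;
  tip_conj : forall x y z : X, ip y x z = conj (ip x y z);
  tip_scale : forall (a : K) (x y z : X), ip (a *: x) y z = a * ip x y z;
  tip_add : forall x x' y z : X, ip (x + x') y z = ip x y z + ip x' y z
}.

Section Quantities.
Variables (R : realType) (K : numDomainType) (absK : K -> R).
Variables (X : lmodType K) (ip : X -> X -> X -> K).
Variables (n : nat) (y : 'I_n -> X) (z : X) (c : 'I_n -> K).

Definition nc (i : 'I_n) : R := absK (c i).
(* ||y_i|z||^2 = (y_i,y_i|z)  (a nonnegative real, taken via its modulus) *)
Definition ny2 (i : 'I_n) : R := absK (ip (y i) (y i) z).
Definition gij (i j : 'I_n) : R := absK (ip (y i) (y j) z).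

Definition A1 : R :=
  (\big[Num.max/0]_(i < n) (nc i ^+ 2)) * \sum_(i < n) ny2 i.

Definition A2 (al be : R) : R :=
  (\sum_(i < n) nc i `^ (2 * al)) `^ (1 / al) *
  (\sum_(i < n) ny2 i `^ be) `^ (1 / be).

Definition A3 : R :=
  (\sum_(i < n) nc i ^+ 2) * \big[Num.max/0]_(i < n) ny2 i.

Definition B1 : R :=
  (\big[Num.max/0]_(i < n) \big[Num.max/0]_(j < n | j != i) (nc i * nc j)) *
  \sum_(i < n) \sum_(j < n | j != i) gij i j.

Definition B2 (ga de : R) : R :=
  ((\sum_(i < n) nc i `^ ga) ^+ 2 - \sum_(i < n) nc i `^ (2 * ga)) `^ (1 / ga) *
  (\sum_(i < n) \sum_(j < n | j != i) gij i j `^ de) `^ (1 / de).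

Definition B3 : R :=
  ((\sum_(i < n) nc i) ^+ 2 - \sum_(i < n) nc i ^+ 2) *
  \big[Num.max/0]_(i < n) \big[Num.max/0]_(j < n | j != i) gij i j.

Definition A_choice (A : R) : Prop :=
  A = A1 \/
  (exists al be : R, 1 < al /\ al^-1 + be^-1 = 1 /\ A = A2 al be) \/
  A = A3.

Definition B_choice (B : R) : Prop :=
  B = B1 \/
  (exists ga de : R, 1 < ga /\ ga^-1 + de^-1 = 1 /\ B = B2 ga de) \/
  B = B3.

Definition main_ineq (x : X) : Prop :=
  forall A B : R, A_choice A -> B_choice B ->
    absK (\sum_(i < n) c i * ip x (y i) z) ^+ 2 <= absK (ip x x z) * (A + B).

End Quantities.

(* Main.v *)
Require Import Defs.
From mathcomp Require Import all_boot all_order all_algebra.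
From mathcomp Require Import reals exp.
From mathcomp Require Import complex.
From mathcomp Require Import ring lra.
Import Order.TTheory GRing.Theory Num.Theory.
Local Open Scope ring_scope.

Lemma powR_invx (R : realType) (x p : R) : 0 < x -> (x^-1) `^ p = (x `^ p)^-1.
Proof.
move=> x0; rewrite -powR_inv1 ?ltW // -powRrM mulN1r powRN //.
Qed.

Lemma powR_div_aux (R : realType) (x N S p : R) :
  0 <= x -> 0 < N -> N `^ p = S -> (x / N) `^ p = x `^ p / S.
Proof.
move=> x0 N0 NS; rewrite powRM // ?invr_ge0 ?ltW // powR_invx // NS //.
Qed.

Lemma hoelder_fin (R : realType) (I : finType) (P : pred I) (a b : I -> R) (p q : R) :
  (forall i, 0 <= a i) -> (forall i, 0 <= b i) -> 0 < p -> 0 < q -> p^-1 + q^-1 = 1 ->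
  \sum_(i | P i) a i * b i <=
  (\sum_(i | P i) a i `^ p) `^ p^-1 * (\sum_(i | P i) b i `^ q) `^ q^-1.
Proof.
move=> a0 b0 p0 q0 pq.
set Sa := \sum_(i | P i) a i `^ p; set Sb := \sum_(i | P i) b i `^ q.
have Sa0 : 0 <= Sa by apply: sumr_ge0 => i _; exact: powR_ge0.
have Sb0 : 0 <= Sb by apply: sumr_ge0 => i _; exact: powR_ge0.
have rhs0 : 0 <= Sa `^ p^-1 * Sb `^ q^-1 by rewrite mulr_ge0 ?powR_ge0.
have [SaE|SaN] := eqVneq Sa 0.
  have az : forall i, P i -> a i = 0.
    move=> i Pi; apply: (@powR_eq0_eq0 _ _ p).
    by apply: (psumr_eq0P _ SaE) => // j _; exact: powR_ge0.
  rewrite big1 // => i Pi; by rewrite az // mul0r.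
have [SbE|SbN] := eqVneq Sb 0.
  have bz : forall i, P i -> b i = 0.
    move=> i Pi; apply: (@powR_eq0_eq0 _ _ q).
    by apply: (psumr_eq0P _ SbE) => // j _; exact: powR_ge0.
  rewrite big1 // => i Pi; by rewrite bz // mulr0.
have Sap : 0 < Sa by rewrite lt_def SaN.
have Sbp : 0 < Sb by rewrite lt_def SbN.
set Na := Sa `^ p^-1; set Nb := Sb `^ q^-1.
have Nap : 0 < Na by exact: powR_gt0.
have Nbp : 0 < Nb by exact: powR_gt0.
have NaE : Na `^ p = Sa by rewrite -powRrM mulVf ?gt_eqF // powRr1.
have NbE : Nb `^ q = Sb by rewrite -powRrM mulVf ?gt_eqF // powRr1.
have key : \sum_(i | P i) (a i / Na) * (b i / Nb) <= 1.
  have young : forall u v : R, 0 <= u -> 0 <= v -> u * v <= u `^ p / p + v `^ q / q.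
    by move=> u v hu hv; exact: (conjugate_powR hu hv p0 q0 pq).
  apply: (le_trans (ler_sum _ (fun i _ => young (a i / Na) (b i / Nb)
     (divr_ge0 (a0 i) (ltW Nap)) (divr_ge0 (b0 i) (ltW Nbp))))).
  rewrite (eq_bigr (fun i => a i `^ p * Sa^-1 * p^-1 + b i `^ q * Sb^-1 * q^-1)); last first.
    move=> i _.
    by congr (_ * _ + _ * _); apply: powR_div_aux.
  rewrite big_split /=.
  timeout 20 rewrite -!mulr_suml -/Sa -/Sb.
  by rewrite !mulfV ?gt_eqF // !mul1r pq.
clearbody Na Nb.
have -> : \sum_(i | P i) a i * b i = Na * Nb * \sum_(i | P i) (a i / Na) * (b i / Nb).
  rewrite mulr_sumr; apply: eq_bigr => i _.
  by rewrite mulrACA [Na * _]mulrC [Nb * _]mulrC !divfK // gt_eqF.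
rewrite -[X in _ <= X]mulr1 ler_wpM2l //; exact: (mulr_ge0 (ltW Nap) (ltW Nbp)).
Qed.

Section RealBounds.
Variables (R : realType) (n : nat) (a b : 'I_n -> R) (g : 'I_n -> 'I_n -> R).
Hypotheses (a0 : forall i, 0 <= a i) (b0 : forall i, 0 <= b i) (g0 : forall i j, 0 <= g i j).

Lemma offdiag (f : 'I_n -> R) :
  \sum_(i < n) \sum_(j < n | j != i) f i * f j = (\sum_(i < n) f i) ^+ 2 - \sum_(i < n) f i ^+ 2.
Proof.
have -> : (\sum_(i < n) f i) ^+ 2 = \sum_(i < n) (f i ^+ 2 + \sum_(j < n | j != i) f i * f j).
  rewrite expr2 mulr_suml; apply: eq_bigr => i _.
  by rewrite mulr_sumr (bigD1 i) //= expr2.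
by rewrite big_split /= [X in _ = X - _]addrC addrK.
Qed.

Lemma LA1 : \sum_(i < n) a i ^+ 2 * b i <=
  (\big[Num.max/0]_(i < n) a i ^+ 2) * \sum_(i < n) b i.
Proof.
rewrite mulr_sumr; apply: ler_sum => i _; apply: ler_wpM2r => //.
exact: (le_bigmax _ (fun i => a i ^+ 2) i).
Qed.

Lemma LA3 : \sum_(i < n) a i ^+ 2 * b i <=
  (\sum_(i < n) a i ^+ 2) * \big[Num.max/0]_(i < n) b i.
Proof.
rewrite mulr_suml; apply: ler_sum => i _; apply: ler_wpM2l; first exact: sqr_ge0.
exact: (le_bigmax _ b i).
Qed.

Lemma conj_pos (al be : R) : 1 < al -> al^-1 + be^-1 = 1 -> 0 < al /\ 0 < be.
Proof.
move=> al1 h; have al0 : 0 < al by apply: lt_trans al1.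
split => //.
have : al^-1 < 1 by rewrite invf_lt1.
rewrite -h ltrDl invr_gt0 //.
Qed.

Lemma LA2 (al be : R) : 1 < al -> al^-1 + be^-1 = 1 ->
  \sum_(i < n) a i ^+ 2 * b i <=
  (\sum_(i < n) a i `^ (2 * al)) `^ (1 / al) * (\sum_(i < n) b i `^ be) `^ (1 / be).
Proof.
move=> al1 h; have [al0 be0] := conj_pos _ _ al1 h.
have -> : \sum_(i < n) a i `^ (2 * al) = \sum_(i < n) (a i ^+ 2) `^ al.
  by apply: eq_bigr => i _; rewrite powRrM powR_mulrn.
rewrite !div1r.
exact: (hoelder_fin _ _ (fun _ => true) (fun i => a i ^+ 2) b al be (fun i => sqr_ge0 _) b0 al0 be0 h).
Qed.

Lemma LB1 : \sum_(i < n) \sum_(j < n | j != i) a i * a j * g i j <=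
  (\big[Num.max/0]_(i < n) \big[Num.max/0]_(j < n | j != i) (a i * a j)) *
  \sum_(i < n) \sum_(j < n | j != i) g i j.
Proof.
rewrite mulr_sumr; apply: ler_sum => i _; rewrite mulr_sumr; apply: ler_sum => j ji.
apply: ler_wpM2r => //.
apply: le_trans (le_bigmax _ (fun i => \big[Num.max/0]_(j < n | j != i) (a i * a j)) i).
exact: (le_bigmax_cond _ (fun j => a i * a j) ji).
Qed.

Lemma LB3 : \sum_(i < n) \sum_(j < n | j != i) a i * a j * g i j <=
  ((\sum_(i < n) a i) ^+ 2 - \sum_(i < n) a i ^+ 2) *
  \big[Num.max/0]_(i < n) \big[Num.max/0]_(j < n | j != i) g i j.
Proof.
rewrite -offdiag mulr_suml; apply: ler_sum => i _; rewrite mulr_suml; apply: ler_sum => j ji.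
apply: ler_wpM2l; first exact: mulr_ge0.
apply: le_trans (le_bigmax _ (fun i => \big[Num.max/0]_(j < n | j != i) g i j) i).
exact: (le_bigmax_cond _ (fun j => g i j) ji).
Qed.

Lemma LB2 (ga de : R) : 1 < ga -> ga^-1 + de^-1 = 1 ->
  \sum_(i < n) \sum_(j < n | j != i) a i * a j * g i j <=
  ((\sum_(i < n) a i `^ ga) ^+ 2 - \sum_(i < n) a i `^ (2 * ga)) `^ (1 / ga) *
  (\sum_(i < n) \sum_(j < n | j != i) g i j `^ de) `^ (1 / de).
Proof.
move=> ga1 h; have [ga0 de0] := conj_pos _ _ ga1 h.
have -> : \sum_(i < n) a i `^ (2 * ga) = \sum_(i < n) (a i `^ ga) ^+ 2.
  by apply: eq_bigr => i _; rewrite mulrC powRrM powR_mulrn // powR_ge0.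
rewrite -offdiag.
have -> : \sum_(i < n) \sum_(j < n | j != i) a i `^ ga * a j `^ ga =
          \sum_(i < n) \sum_(j < n | j != i) (a i * a j) `^ ga.
  by apply: eq_bigr => i _; apply: eq_bigr => j _; rewrite powRM.
rewrite !pair_big_dep !div1r /=.
exact: (hoelder_fin _ _ (fun p : 'I_n * 'I_n => p.2 != p.1) (fun p => a p.1 * a p.2)
   (fun p => g p.1 p.2) ga de (fun p => mulr_ge0 (a0 _) (a0 _)) (fun p => g0 _ _) ga0 de0 h).
Qed.

End RealBounds.

Lemma cs_real (R : realType) (X0 C W : R) :
  (forall s, 0 <= X0 - s * C - s * C + s * s * C * W) -> 0 <= C -> 0 <= W -> 0 <= X0 ->
  C <= X0 * W.
Proof.
move=> H C0 W0 X00.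
have [Wz|Wn] := eqVneq W 0.
  rewrite Wz mulr0; have [//|Cp] := lerP C 0; exfalso.
  have := H ((X0 + 1) / C).
  rewrite Wz !mulr0 addr0 divfK ?gt_eqF //; lra.
have Wp : 0 < W by rewrite lt_def Wn.
have hv : W^-1 * W = 1 by rewrite mulVf.
have h1 := mulr_ge0 (H W^-1) W0.
have E : (X0 - W^-1 * C - W^-1 * C + W^-1 * W^-1 * C * W) * W =
   X0 * W - C * (W^-1 * W) - C * (W^-1 * W) + C * (W^-1 * W) * (W^-1 * W) by ring.
rewrite E hv in h1; lra.
Qed.

Section Gen.
Variables (R : realType) (K : numDomainType) (conj : K -> K) (absK : K -> R) (emb : R -> K).
Hypotheses (conjD : forall a b, conj (a + b) = conj a + conj b)
  (conjN : forall a, conj (- a) = - conj a)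
  (conjM : forall a b, conj (a * b) = conj a * conj b)
  (conj0 : conj 0 = 0)
  (conjK : forall a, conj (conj a) = a)
  (conj_emb : forall r, conj (emb r) = emb r)
  (mulJ : forall a, a * conj a = emb (absK a ^+ 2))
  (embD : forall r s, emb (r + s) = emb r + emb s)
  (embN : forall r, emb (- r) = - emb r)
  (embM : forall r s, emb (r * s) = emb r * emb s)
  (emb_inj : injective emb)
  (absK_emb : forall r, absK (emb r) = `|r|)
  (absK_id : forall a, 0 <= a -> a = emb (absK a))
  (absKM : forall a b, absK (a * b) = absK a * absK b)
  (absKD : forall a b, absK (a + b) <= absK a + absK b)
  (absK0 : absK 0 = 0)
  (absK_ge0 : forall a, 0 <= absK a)
  (absKJ : forall a, absK (conj a) = absK a).
Variables (X : lmodType K) (ip : X -> X -> X -> K).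
Hypothesis hip : two_inner_product conj ip.
Variable z : X.

Lemma ip0l y : ip 0 y z = 0.
Proof. by rewrite -(scale0r 0) (tip_scale hip) mul0r. Qed.

Lemma ip_suml (I : Type) (r : seq I) (F : I -> X) y :
  ip (\sum_(i <- r) F i) y z = \sum_(i <- r) ip (F i) y z.
Proof.
exact: (big_morph (fun v => ip v y z) (fun u v => tip_add hip u v y z) (ip0l y)).
Qed.

Lemma conj_sum (I : Type) (r : seq I) (F : I -> K) :
  conj (\sum_(i <- r) F i) = \sum_(i <- r) conj (F i).
Proof. exact: (big_morph conj conjD conj0). Qed.

Lemma ipr x y : ip x y z = conj (ip y x z).
Proof. by rewrite (tip_conj hip). Qed.

Lemma ip_sumr (I : Type) (r : seq I) (d : I -> K) (F : I -> X) x :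
  ip x (\sum_(i <- r) d i *: F i) z = \sum_(i <- r) conj (d i) * ip x (F i) z.
Proof.
rewrite ipr ip_suml conj_sum; apply: eq_bigr => i _.
by rewrite (tip_scale hip) conjM -ipr.
Qed.

Lemma absK_sum (I : Type) (r : seq I) (P : pred I) (F : I -> K) :
  absK (\sum_(i <- r | P i) F i) <= \sum_(i <- r | P i) absK (F i).
Proof.
apply: (big_rec2 (fun u v => absK u <= v)); first by rewrite absK0.
by move=> i u v _ h; apply: le_trans (absKD _ _) _; rewrite lerD2l.
Qed.

Lemma ge0_emb r : 0 <= emb r -> 0 <= r.
Proof.
move=> h; have := absK_id _ h; rewrite absK_emb => /emb_inj ->; exact: normr_ge0.
Qed.

Lemma main_gen n (x : X) (y : 'I_n -> X) (c : 'I_n -> K) :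
  absK (\sum_(i < n) c i * ip x (y i) z) ^+ 2 <= absK (ip x x z) *
     (\sum_(i < n) absK (c i) ^+ 2 * absK (ip (y i) (y i) z) +
      \sum_(i < n) \sum_(j < n | j != i) absK (c i) * absK (c j) * absK (ip (y i) (y j) z)).
Proof.
pose w := \sum_(i < n) conj (c i) *: y i.
have hb : \sum_(i < n) c i * ip x (y i) z = ip x w z.
  by rewrite ip_sumr; apply: eq_bigr => i _; rewrite conjK.
have hw : ip w w z = \sum_(i < n) \sum_(j < n) conj (c i) * c j * ip (y i) (y j) z.
  rewrite {1}/w ip_suml; apply: eq_bigr => i _.
  rewrite (tip_scale hip) ip_sumr mulr_sumr; apply: eq_bigr => j _.
  by rewrite conjK mulrA.
set b := ip x w z in hb; rewrite hb.
set W := absK (ip w w z).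
have hxx : ip x x z = emb (absK (ip x x z)) by apply: absK_id; exact: (tip_nonneg hip).
have hww : ip w w z = emb W by apply: absK_id; exact: (tip_nonneg hip).
have hW : W <= \sum_(i < n) absK (c i) ^+ 2 * absK (ip (y i) (y i) z) +
      \sum_(i < n) \sum_(j < n | j != i) absK (c i) * absK (c j) * absK (ip (y i) (y j) z).
  rewrite /W hw; apply: le_trans (absK_sum _ _ _ _) _.
  rewrite -big_split /=; apply: ler_sum => i _.
  apply: le_trans (absK_sum _ _ _ _) _.
  rewrite (bigD1 i) //= !absKM absKJ expr2 lerD2l.
  by apply: ler_sum => j _; rewrite !absKM absKJ.
apply: le_trans (ler_wpM2l (absK_ge0 _) hW).
apply: cs_real; [|exact: exprn_ge0 (absK_ge0 _)|exact: absK_ge0|exact: absK_ge0].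
move=> s; apply: ge0_emb.
pose t := - (emb s * b).
have ct : conj t = - (emb s * conj b) by rewrite /t conjN conjM conj_emb.
have hbx : ip w x z = conj b by rewrite /b ipr.
have := tip_nonneg hip (x + t *: w) z.
rewrite (tip_add hip) (tip_scale hip) (ipr x) (ipr w) !(tip_add hip) !(tip_scale hip).
rewrite !conjD !conjM -!ipr hbx -/b ct.
move=> h; apply: (le_trans h); rewrite le_eqVlt; apply/orP; left; apply/eqP.
rewrite !embD !embN !embM -(embM (absK b) (absK b)) -[absK b * absK b]expr2 -mulJ -hxx -hww /t.
ring.
Qed.

Lemma final_gen n (x : X) (y : 'I_n -> X) (c : 'I_n -> K) :
  main_ineq absK ip y z c x.
Proof using All.
move=> A B hA hB.
apply: le_trans (main_gen _ x y c) _.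
apply: ler_wpM2l; first exact: absK_ge0.
apply: lerD.
- case: hA => [->|[[al [be [h1 [h2 ->]]]]|->]]; rewrite /A1 /A2 /A3 /nc /ny2.
  + by apply: LA1 => *; exact: absK_ge0.
  + by apply: LA2 => // *; exact: absK_ge0.
  + by apply: LA3 => *; exact: absK_ge0.
- case: hB => [->|[[al [be [h1 [h2 ->]]]]|->]]; rewrite /B1 /B2 /B3 /nc /gij.
  + by apply: LB1 => *; exact: absK_ge0.
  + by apply: LB2 => // *; exact: absK_ge0.
  + by apply: LB3 => *; exact: absK_ge0.
Qed.

End Gen.

Theorem theorem3p1 (R : realType) :
  (forall (X : lmodType R) (ip : X -> X -> X -> R),
     two_inner_product (fun a : R => a) ip ->
     forall (n : nat), (0 < n)%N ->
     forall (x : X) (y : 'I_n -> X) (z : X) (c : 'I_n -> R),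
       main_ineq (fun a : R => `|a|) ip y z c x) /\
  (forall (X : lmodType R[i]) (ip : X -> X -> X -> R[i]),
     two_inner_product (fun a : R[i] => a^*) ip ->
     forall (n : nat), (0 < n)%N ->
     forall (x : X) (y : 'I_n -> X) (z : X) (c : 'I_n -> R[i]),
       main_ineq (fun a : R[i] => Normc.normc a) ip y z c x).
Proof.
split.
{ move=> X ip hip n n0 x y z c.
  apply: (@final_gen R R (fun a => a) (fun a => `|a|) (fun a => a)) => //.
  - by move=> a; rewrite real_normK ?num_real // expr2.
  - by move=> a h; rewrite ger0_norm.
  - exact: normrM.
  - exact: ler_normD.
  - exact: normr0. }
{ move=> X ip hip n n0 x y z c.
  apply: (@final_gen R R[i] (fun a => a^*) (fun a => Normc.normc a) (fun r => r%:C%C)) => //.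
  - by move=> a b; rewrite rmorphD.
  - by move=> a; rewrite rmorphN.
  - by move=> a b; rewrite rmorphM.
  - by rewrite rmorph0.
  - exact: conjCK.
  - by move=> r; exact: conjc_real.
  - by move=> a; rewrite rmorphXn; exact: (esym (sqr_normc a)).
  - by move=> r s; rewrite rmorphD.
  - by move=> r; rewrite rmorphN.
  - by move=> r s; rewrite rmorphM.
  - exact: complexI.
  - by move=> r; rewrite /Normc.normc /= expr0n addr0 sqrtr_sqr.
  - by move=> a h; rewrite -{1}(ger0_norm h).
  - exact: Normc.normcM.
  - exact: le_normcD.
  - exact: Normc.normc0.
  - by case=> a b; exact: sqrtr_ge0.
  - by move=> a; apply: complexI; exact: normcJ. }
Qed.
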